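(* Let $M\in\mathbb R^{N\times N}$ be symmetric positive definite and $\eta>0$. Let $\{a_k\}_{k\ge1}$ be a nonnegative sequence and $\{z_k\}_{k\ge0}$ a sequence in $\mathbb R^N$ with $z_1=z_0$. Fix $z^*\in\mathbb R^N$ and define $w_k=\eta(z_k-z^* )+a_k(z_k-z_{k-1})$ for $k\ge1$. Assume $W:=\sup_{k\ge1}\|w_k\|_M<+\infty$. Then for all $k\ge1$, $\|z_k-z^*\|_M\le W/\eta$ and $a_k\|z_k-z_{k-1}\|_M\le 2W$.
   Context: $\|z\|_M^2:=\langle Mz,z\rangle$. *)

(* Defs.v *)
From HB Require Import structures.
From mathcomp Require Import all_boot all_order all_algebra.
From mathcomp Require Import boolp classical_sets reals.
Set Implicit Arguments. Unset Strict Implicit. Unset Printing Implicit Defensive.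
Import Order.TTheory GRing.Theory Num.Theory.
Local Open Scope ring_scope.

Definition Mform (R : realType) (N : nat) (M : 'M[R]_N) (z : 'cV[R]_N) : R :=
  (z^T *m M *m z) 0 0.

Definition Mnorm (R : realType) (N : nat) (M : 'M[R]_N) (z : 'cV[R]_N) : R :=
  Num.sqrt (Mform M z).

Definition spd (R : realType) (N : nat) (M : 'M[R]_N) : Prop :=
  M^T = M /\ forall v : 'cV[R]_N, v != 0 -> 0 < Mform M v.

(* Main.v *)
Require Import Defs.
From HB Require Import structures.
From mathcomp Require Import all_boot all_order all_algebra.
From mathcomp Require Import boolp classical_sets reals.
From mathcomp Require Import ring lra.
Import Order.TTheory GRing.Theory Num.Theory.
Local Open Scope ring_scope.

Section Aux.
Variables (R : realType) (N : nat) (M : 'M[R]_N).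
Hypothesis hM : spd M.

Definition B (u v : 'cV[R]_N) : R := (u^T *m M *m v) 0 0.

Lemma BDl u1 u2 v : B (u1 + u2) v = B u1 v + B u2 v.
Proof. by rewrite /B linearD /= !mulmxDl mxE. Qed.
Lemma BDr u v1 v2 : B u (v1 + v2) = B u v1 + B u v2.
Proof. by rewrite /B mulmxDr mxE. Qed.
Lemma BZl c u v : B (c *: u) v = c * B u v.
Proof. by rewrite /B linearZ /= -!scalemxAl mxE. Qed.
Lemma BZr c u v : B u (c *: v) = c * B u v.
Proof. by rewrite /B -scalemxAr mxE. Qed.
Lemma BC u v : B u v = B v u.
Proof.
have -> : B u v = ((u^T *m M *m v)^T) 0 0 by rewrite mxE.
by rewrite !trmx_mul trmxK hM.1 mulmxA.
Qed.
Lemma B0l v : B 0 v = 0.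
Proof. by rewrite -(scale0r (0 : 'cV[R]_N)) BZl mul0r. Qed.
Lemma Bge0 v : 0 <= B v v.
Proof.
have [->|nz] := eqVneq v 0; first by rewrite B0l.
exact/ltW/(hM.2 v nz).
Qed.
Lemma BCS u v : B u v ^+ 2 <= B u u * B v v.
Proof.
have [->|nz] := eqVneq u 0; first by rewrite !B0l expr0n /= mul0r.
have qp : 0 < B u u := hM.2 u nz.
have := Bge0 (B u u *: v - B u v *: u).
rewrite -scaleNr !(BDl, BDr, BZl, BZr) (BC v u) => h.
nra.
Qed.
Lemma MnormE v : Mnorm M v = Num.sqrt (B v v).
Proof. by []. Qed.
Lemma Mnorm_ge0 v : 0 <= Mnorm M v.
Proof. exact: sqrtr_ge0. Qed.
Lemma MnormZ c v : Mnorm M (c *: v) = `|c| * Mnorm M v.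
Proof.
by rewrite !MnormE BZl BZr mulrA -expr2 sqrtrM ?sqr_ge0 // sqrtr_sqr.
Qed.
Lemma MnormN v : Mnorm M (- v) = Mnorm M v.
Proof. by rewrite -scaleN1r MnormZ normrN normr1 mul1r. Qed.
Lemma MnormD u v : Mnorm M (u + v) <= Mnorm M u + Mnorm M v.
Proof.
rewrite !MnormE.
set a := B u u; set b := B v v.
have ha : 0 <= a := Bge0 u. have hb : 0 <= b := Bge0 v.
have hc : B u v <= Num.sqrt a * Num.sqrt b.
  rewrite -sqrtrM // (le_trans (ler_norm _)) // -sqrtr_sqr.
  exact/ler_wsqrtr/BCS.
have S0 : 0 <= Num.sqrt a + Num.sqrt b by rewrite addr_ge0 ?sqrtr_ge0.
rewrite -(ger0_norm S0) -sqrtr_sqr; apply: ler_wsqrtr.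
rewrite !(BDl, BDr) (BC v u) sqrrD !sqr_sqrtr //.
rewrite /a /b in hc *; lra.
Qed.
End Aux.

Lemma vecid (R : realType) (N : nat) (d c : R) (E E' : 'cV[R]_N) :
  (d + c) *: E = d *: E + c *: (E - E') + c *: E'.
Proof. by rewrite scalerDl scalerBr -addrA subrK. Qed.
Local Open Scope classical_set_scope.

Theorem lemmaA2 (R : realType) (N : nat) (M : 'M[R]_N) (eta : R)
  (a : nat -> R) (z : nat -> 'cV[R]_N) (zstar : 'cV[R]_N) :
  spd M -> 0 < eta ->
  (forall k, (1 <= k)%N -> 0 <= a k) ->
  z 1%N = z 0%N ->
  let w := fun k : nat => eta *: (z k - zstar) + a k *: (z k - z k.-1) in
  let S := [set Mnorm M (w k) | k in [set k : nat | (1 <= k)%N]] in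
  has_ubound S ->
  let W := sup S in
  forall k : nat, (1 <= k)%N ->
    Mnorm M (z k - zstar) <= W / eta /\
    a k * Mnorm M (z k - z k.-1) <= 2 * W.
Proof.
move=> hM heta ha h10 w S hub W.
have hS : forall k, (1 <= k)%N -> Mnorm M (w k) <= W.
  move=> k hk; apply: sup_upper_bound; last by exists k.
  by split => //; exists (Mnorm M (w 1%N)); exists 1%N.
have W0 : 0 <= W := le_trans (sqrtr_ge0 _) (hS 1%N isT).
have WE : W = eta * (W / eta) by rewrite mulrC divfK // gt_eqF.
have hW : 0 <= W / eta by rewrite divr_ge0 // ltW.
have wE : forall k, w k = eta *: (z k - zstar) + a k *: ((z k - zstar) - (z k.-1 - zstar)).
  by move=> k; rewrite /w opprB addrA subrK.
have first : forall k, (1 <= k)%N -> Mnorm M (z k - zstar) <= W / eta.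
  elim=> [//|[|n] IH _].
    have := hS 1%N isT; rewrite /w h10 subrr scaler0 addr0 MnormZ (ger0_norm (ltW heta)).
    set x := Mnorm M _ => h. nra.
  have IH' := IH isT.
  have e : (eta + a n.+2) *: (z n.+2 - zstar) = w n.+2 + a n.+2 *: (z n.+2.-1 - zstar).
    by rewrite wE (@vecid _ _ _ _ _ (z n.+2.-1 - zstar)).
  have h1 := @MnormD _ _ _ hM (w n.+2) (a n.+2 *: (z n.+2.-1 - zstar)).
  rewrite -e !MnormZ !ger0_norm ?addr_ge0 ?ha ?(ltW heta) // in h1.
  have h2 := hS n.+2 isT. have h3 := ha n.+2 isT.
  have h4 := ler_wpM2l h3 IH'.
  simpl in h1.
  move: h1 h2 h4 hW WE IH'; set u := W / eta; set m := Mnorm M (z n.+1 - zstar).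
  set x := Mnorm M (z n.+2 - zstar); set y := Mnorm M (w n.+2).
  move=> h1 h2 h4 hW WE IH'.
  rewrite WE in h2. have h5 : 0 < eta + a n.+2 by lra.
  have h6 : (eta + a n.+2) * x <= (eta + a n.+2) * u by lra.
  by rewrite -(ler_pM2l h5).
move=> k hk; split; first exact: first.
have e : a k *: (z k - z k.-1) = w k - eta *: (z k - zstar).
  by rewrite /w addrAC subrr add0r.
rewrite -(ger0_norm (ha k hk)) -MnormZ e.
apply: (le_trans (@MnormD _ _ _ hM _ _)); rewrite MnormN MnormZ (ger0_norm (ltW heta)).
have := hS k hk; have := first k hk.
move: WE; set u := W / eta; set m := Mnorm M (z k - zstar); move=> WE h h'.
rewrite WE; nra.
Qed.
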